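(* Let $n\ge2$. The set $\mathcal{C}=\{N\in\mathcal{G}_n:\mathbb{F}_n/N\text{ is co-Hopfian}\}$ is in $\mathbf{\Pi}^0_2$, and $\mathcal{C}$ is not closed in $\mathcal{G}_n$.
   Context: $\mathbb{F}_n$ is the free group on $\gamma_1,\dots,\gamma_n$. $\mathcal{G}_n$ is the set of normal subgroups $N\trianglelefteq\mathbb{F}_n$, viewed as a subset of $\{0,1\}^{\mathbb{F}_n}$ with the subspace topology of the product of discrete topologies (a compact zero-dimensional Polish space). A group is co-Hopfian if every injective endomorphism of it is an isomorphism. $\mathbf{\Pi}^0_2$ = countable intersections of open sets. *)

(* Defs.v *)
From mathcomp Require Import all_boot.
Set Implicit Arguments. Unset Strict Implicit. Unset Printing Implicit Defensive.

(* A letter is (i, b): b = true means gamma_i, b = false means gamma_i^-1. *)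
Definition letter (n : nat) := ('I_n * bool)%type.

Definition canc n (x y : letter n) : bool := (x.1 == y.1) && (x.2 != y.2).

Fixpoint reducedb n (w : seq (letter n)) : bool :=
  match w with
  | x :: ((y :: _) as t) => ~~ canc x y && reducedb t
  | _ => true
  end.

Definition red_step n (x : letter n) (acc : seq (letter n)) : seq (letter n) :=
  match acc with
  | y :: t => if canc x y then t else x :: acc
  | [::] => [:: x]
  end.

Definition reduce n (w : seq (letter n)) : seq (letter n) := foldr (@red_step n) [::] w.

Lemma reducedb_tail n (y : letter n) t : reducedb (y :: t) -> reducedb t.
Proof. by case: t => [|z t] //= /andP[]. Qed.

Lemma reduce_reduced n (w : seq (letter n)) : reducedb (reduce w).
Proof.
elim: w => [|x w IH] //=; rewrite /reduce /= -/(reduce w).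
move: IH; case: (reduce w) => [|y t] //= IH.
case: ifP => H; first exact: (reducedb_tail IH).
by rewrite /= H IH.
Qed.

Definition F (n : nat) := {w : seq (letter n) | reducedb w}.

Definition Fone n : F n := exist _ [::] erefl.
Definition Fmul n (u v : F n) : F n :=
  exist _ (reduce (val u ++ val v)) (reduce_reduced _).
Definition flip n (x : letter n) : letter n := (x.1, ~~ x.2).
Definition Finv n (u : F n) : F n :=
  exist _ (reduce (rev (map (@flip n) (val u)))) (reduce_reduced _).
Definition gen n (i : 'I_n) : F n := exist _ [:: (i, true)] erefl.

Definition isNormal n (N : F n -> bool) : Prop :=
  [/\ N (Fone n),
      (forall x y, N x -> N y -> N (Fmul x (Finv y))) &
      (forall g x, N x -> N (Fmul (Fmul g x) (Finv g)))].

(* The quotient F_n/N, presented as F_n with the congruence x ~ y iff x y^-1 in N.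
   Endomorphisms of F_n/N are exactly (classes of) maps f : F_n -> F_n
   respecting ~ and multiplicative up to ~. *)
Definition qeq n (N : F n -> bool) (x y : F n) : Prop := N (Fmul x (Finv y)).

Definition quot_coHopfian n (N : F n -> bool) : Prop :=
  forall f : F n -> F n,
    (forall x y, qeq N x y -> qeq N (f x) (f y)) ->
    (forall x y, qeq N (f (Fmul x y)) (Fmul (f x) (f y))) ->
    (forall x y, qeq N (f x) (f y) -> qeq N x y) ->
    (forall y, exists x, qeq N (f x) y).

Definition open_set (T : eqType) (U : (T -> bool) -> Prop) : Prop :=
  forall x, U x -> exists s : seq T,
    forall y, (forall g, g \in s -> y g = x g) -> U y.

Definition closed_set (T : eqType) (K : (T -> bool) -> Prop) : Prop :=
  open_set (fun x => ~ K x).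

Definition Pi02_in (T : eqType) (G C : (T -> bool) -> Prop) : Prop :=
  exists U : nat -> (T -> bool) -> Prop,
    (forall k, open_set (U k)) /\ (forall x, G x -> (C x <-> forall k, U k x)).

Definition closed_in (T : eqType) (G C : (T -> bool) -> Prop) : Prop :=
  exists K, closed_set K /\ (forall x, G x -> (C x <-> K x)).

(* Main.v *)
Require Import Defs.
From mathcomp Require Import all_boot all_algebra zify.
From Stdlib Require Import Classical.
Set Implicit Arguments. Unset Strict Implicit. Unset Printing Implicit Defensive.
Import GRing.Theory Num.Theory.

Section FG.
Variable n : nat.
Implicit Types (s w r : seq (letter n)) (x y : letter n) (u v a b c : F n).

Definition act s w := foldr (@red_step n) w s.

Lemma act_cat s1 s2 w : act (s1 ++ s2) w = act s1 (act s2 w).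
Proof. by rewrite /act foldr_cat. Qed.

Lemma red_step_reduced x w : reducedb w -> reducedb (red_step x w).
Proof.
case: w => [|y t] //= H. case: ifP => C; first exact: reducedb_tail H.
by rewrite /= C H.
Qed.

Lemma act_reduced s w : reducedb w -> reducedb (act s w).
Proof. elim: s => //= x s IH H; exact: red_step_reduced (IH H). Qed.

Lemma reduce_id w : reducedb w -> reduce w = w.
Proof.
elim: w => [|x w IH] //= H.
rewrite /reduce /= -/(reduce w) IH; last exact: reducedb_tail H.
move: H; case: w {IH} => [|y t] //= /andP[C _]. by rewrite (negbTE C).
Qed.

Lemma canc_flip x y : canc x y -> y = flip x.
Proof.
case: x y => [i b] [j c]; rewrite /canc /flip /= => /andP[/eqP ->].
by case: b; case: c.
Qed.

Lemma flipK : involutive (@flip n).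
Proof. by case=> i b; rewrite /flip /= negbK. Qed.

Lemma canc_flipx x : canc (flip x) x.
Proof. by case: x => i b; rewrite /canc /flip /= eqxx; case: b. Qed.

Lemma red_stepK x w : reducedb w -> red_step (flip x) (red_step x w) = w.
Proof.
case: w => [|y t] /=; first by rewrite canc_flipx.
case: ifP => [/canc_flip -> |_] H; last by rewrite /= canc_flipx.
case: t H => [|z t] //= /andP[C _]. by rewrite (negbTE C).
Qed.

Lemma red_stepK' x w : reducedb w -> red_step x (red_step (flip x) w) = w.
Proof. by move=> H; rewrite -{1}(flipK x) red_stepK. Qed.

Lemma act_red_step x r w : reducedb w -> act (red_step x r) w = red_step x (act r w).
Proof.
move=> Hw; case: r => [|y t] //=. case: ifP => // /canc_flip ->.
by rewrite red_stepK' // act_reduced.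
Qed.

Lemma act_reduce s w : reducedb w -> act (reduce s) w = act s w.
Proof.
move=> Hw; elim: s => [|x s IH] //.
have -> : reduce (x :: s) = red_step x (reduce s) by [].
by rewrite act_red_step // IH.
Qed.

Lemma act_invK s w : reducedb w -> act (rev (map (@flip n) s)) (act s w) = w.
Proof.
elim: s w => [|x s IH] w Hw //.
rewrite /= rev_cons -cats1 act_cat.
have -> : act [:: flip x] (red_step x (act s w)) = act s w.
  by rewrite /= red_stepK // act_reduced.
exact: IH.
Qed.

Lemma FmulE u v : val (Fmul u v) = act (val u) (val v).
Proof.
by rewrite /= /reduce foldr_cat -/(reduce (val v)) reduce_id // (valP v).
Qed.

Lemma reduceE s : reduce s = act s [::]. Proof. by []. Qed.

Lemma mul1F u : Fmul (Fone n) u = u.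
Proof. by apply: val_inj; rewrite FmulE. Qed.

Lemma mulF1 u : Fmul u (Fone n) = u.
Proof. by apply: val_inj; rewrite FmulE /= -reduceE reduce_id // (valP u). Qed.

Lemma mulFA a b c : Fmul a (Fmul b c) = Fmul (Fmul a b) c.
Proof.
apply: val_inj; rewrite !FmulE.
have -> : act (val a) (val b) = reduce (val a ++ val b).
  by rewrite reduceE act_cat -reduceE reduce_id // (valP b).
by rewrite act_reduce ?act_cat // (valP c).
Qed.

Lemma mulVF u : Fmul (Finv u) u = Fone n.
Proof.
apply: val_inj; rewrite FmulE /= act_reduce ?(valP u) //.
by rewrite -{2}(reduce_id (valP u)) reduceE act_invK.
Qed.

Lemma mulFV u : Fmul u (Finv u) = Fone n.
Proof.
apply: val_inj; rewrite FmulE /= reduceE.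
have H := @act_invK (rev (map (@flip n) (val u))) [::] erefl.
by rewrite map_rev revK (mapK flipK) in H.
Qed.

Lemma invF_uniq a b : Fmul a b = Fone n -> a = Finv b.
Proof. by move=> H; rewrite -[a]mulF1 -(mulFV b) mulFA H mul1F. Qed.

Lemma FinvK u : Finv (Finv u) = u.
Proof. by symmetry; apply: invF_uniq; rewrite mulFV. Qed.

Lemma FinvM a b : Finv (Fmul a b) = Fmul (Finv b) (Finv a).
Proof.
symmetry; apply: invF_uniq.
by rewrite mulFA -(mulFA (Finv b)) mulVF mulF1 mulVF.
Qed.

Lemma Finv1 : Finv (Fone n) = Fone n.
Proof. by symmetry; apply: invF_uniq; rewrite mul1F. Qed.

End FG.

Section Q.
Variable n : nat.
Variable N : F n -> bool.
Hypothesis HN : isNormal N.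
Implicit Types (u v a b c : F n).

Lemma N1 : N (Fone n). Proof. by case: HN. Qed.
Lemma NV a : N a -> N (Finv a).
Proof. by move=> H; case: HN => H1 H2 _; have := H2 _ _ N1 H; rewrite mul1F. Qed.
Lemma NM a b : N a -> N b -> N (Fmul a b).
Proof. by move=> Ha Hb; case: HN => _ H2 _; have := H2 _ _ Ha (NV Hb); rewrite FinvK. Qed.
Lemma Nconj g a : N a -> N (Fmul (Fmul g a) (Finv g)).
Proof. by case: HN => _ _ H3; apply: H3. Qed.

Lemma qrefl a : qeq N a a. Proof. by rewrite /qeq mulFV N1. Qed.
Lemma qsym a b : qeq N a b -> qeq N b a.
Proof. by rewrite /qeq => /NV; rewrite FinvM FinvK. Qed.
Lemma qtrans a b c : qeq N a b -> qeq N b c -> qeq N a c.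
Proof.
rewrite /qeq => H1 H2; have := NM H1 H2.
by rewrite -mulFA (mulFA (Finv b)) mulVF mul1F.
Qed.
Lemma qmulr a b c : qeq N a b -> qeq N (Fmul a c) (Fmul b c).
Proof. by rewrite /qeq FinvM -mulFA (mulFA c) mulFV mul1F. Qed.
Lemma qmull a b c : qeq N a b -> qeq N (Fmul c a) (Fmul c b).
Proof.
rewrite /qeq FinvM => /(Nconj c).
by rewrite -!mulFA.
Qed.
Lemma qmul a a' b b' : qeq N a a' -> qeq N b b' -> qeq N (Fmul a b) (Fmul a' b').
Proof. by move=> H1 H2; apply: qtrans (qmulr _ H1) (qmull _ H2). Qed.
Lemma qone a : qeq N a (Fone n) = N a.
Proof. by rewrite /qeq Finv1 mulF1. Qed.

End Q.

Section Ev.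
Variable n : nat.
Implicit Types (u v a b c : F n) (t : {ffun 'I_n -> F n}) (s r : seq (letter n)).

Definition letF (l : letter n) : F n := exist _ [:: l] erefl.
Definition img t (l : letter n) : F n := if l.2 then t l.1 else Finv (t l.1).
Definition evs t s := foldr (fun l acc => Fmul (img t l) acc) (Fone n) s.
Definition ev t u := evs t (val u).

Lemma img_flip t l : Fmul (img t l) (img t (flip l)) = Fone n.
Proof. by case: l => i [] /=; rewrite /img /= ?mulFV ?mulVF. Qed.

Lemma evs_red_step t l r : evs t (red_step l r) = Fmul (img t l) (evs t r).
Proof.
case: r => [|y r] //=; case: ifP => // /canc_flip ->.
by rewrite mulFA img_flip mul1F.
Qed.

Lemma evs_reduce t s : evs t (reduce s) = evs t s.
Proof.
elim: s => [|x s IH] //.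
have -> : reduce (x :: s) = red_step x (reduce s) by [].
by rewrite evs_red_step IH.
Qed.

Lemma evs_cat t s1 s2 : evs t (s1 ++ s2) = Fmul (evs t s1) (evs t s2).
Proof.
elim: s1 => [|x s IH] /=; first by rewrite mul1F.
by rewrite IH mulFA.
Qed.

Lemma evM t u v : ev t (Fmul u v) = Fmul (ev t u) (ev t v).
Proof. by rewrite /ev /= evs_reduce evs_cat. Qed.

Lemma ev1 t : ev t (Fone n) = Fone n. Proof. by []. Qed.

Lemma evV t u : ev t (Finv u) = Finv (ev t u).
Proof. by apply: invF_uniq; rewrite -evM mulVF. Qed.

Lemma key (N : F n -> bool) (HN : isNormal N) (f : F n -> F n) :
  (forall x y, qeq N (f (Fmul x y)) (Fmul (f x) (f y))) ->
  forall u, qeq N (f u) (ev [ffun i => f (gen i)] u).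
Proof.
move=> Hh.
have f1 : qeq N (f (Fone n)) (Fone n).
  have := Hh (Fone n) (Fone n); rewrite mul1F => /(qmulr (Finv (f (Fone n)))).
  rewrite -mulFA mulFV mulF1 => H; idtac.
  exact (qsym HN H).
have fV g : qeq N (f (Finv g)) (Finv (f g)).
  have := Hh (Finv g) g; rewrite mulVF => H.
  have := qtrans HN (qsym HN H) f1 => /(qmulr (Finv (f g))).
  by rewrite -mulFA mulFV mulF1 mul1F.
case=> w; elim: w => [|l w IH] Hw.
  have -> : exist _ [::] Hw = Fone n by apply: val_inj.
  exact f1.
have Hw' : reducedb w by apply: reducedb_tail Hw.
have -> : exist _ (l :: w) Hw = Fmul (letF l) (exist _ w Hw').
  apply: val_inj; rewrite FmulE /=.
  by move: Hw; case: w {IH Hw'} => [|y t] //= /andP[C _]; rewrite (negbTE C).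
rewrite evM; eapply (qtrans HN (Hh _ _)); apply (qmul HN); last exact (IH Hw').
rewrite /ev /= mulF1 /img; case: l {Hw} => i [] /=; rewrite ffunE; first exact (qrefl HN _).
have -> : letF (i, false) = Finv (gen i) by apply: val_inj.
exact (fV _).
Qed.

Definition Good t (y : F n) (N : F n -> bool) : Prop :=
  forall p : F n * F n, (N p.1 = N (ev t p.1)) /\ ~~ N (Fmul (ev t p.2) (Finv y)).

Lemma coH_iff (N : F n -> bool) : isNormal N ->
  (quot_coHopfian N <-> forall t y, ~ Good t y N).
Proof.
move=> HN; split.
  move=> H t y G.
  have Hq x z : qeq N (ev t x) (ev t z) = qeq N x z.
    rewrite /qeq -evV -evM; by case: (G (Fmul x (Finv z), x)) => <-.
  have [x Hx] : exists x, qeq N (ev t x) y.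
    apply: H => [x z|x z|x z]; rewrite ?Hq //; rewrite evM; exact (qrefl HN _).
  by case: (G (x, x)) => _ /negP; apply.
move=> H f Hwd Hh Hinj y; apply: NNPP => Hns.
apply: (H [ffun i => f (gen i)] y) => -[r x] /=.
have K := key HN Hh.
have f1 : qeq N (f (Fone n)) (Fone n).
  have := Hh (Fone n) (Fone n); rewrite mul1F => /(qmulr (Finv (f (Fone n)))).
  rewrite -mulFA mulFV mulF1 => H'; exact (qsym HN H').
split.
  apply/idP/idP => H1; rewrite -qone; rewrite -qone in H1.
    apply (qtrans HN (qsym HN (K r))); apply (qtrans HN (b:=f (Fone n))) => //; exact (Hwd _ _ H1).
  apply: Hinj; apply (qtrans HN (K r)); exact (qtrans HN H1 (qsym HN f1)).
apply/negP => H1; apply: Hns; exists x; exact (qtrans HN (K x) H1).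
Qed.

Lemma Good_open t y : open_set (fun N => ~ Good t y N).
Proof.
move=> N HG.
have [p Hp] : exists p : F n * F n,
    ~ ((N p.1 = N (ev t p.1)) /\ ~~ N (Fmul (ev t p.2) (Finv y))).
  by apply: not_all_ex_not.
exists [:: p.1; ev t p.1; Fmul (ev t p.2) (Finv y)] => M HM G; apply: Hp.
rewrite -!HM ?inE ?eqxx ?orbT //; exact: G p.
Qed.

Definition Uk (k : nat) : (F n -> bool) -> Prop :=
  match @unpickle ({ffun 'I_n -> F n} * F n)%type k with
  | Some p => fun N => ~ Good p.1 p.2 N
  | None => fun _ => True
  end.

Lemma part1 : Pi02_in (@isNormal n) (fun N => isNormal N /\ quot_coHopfian N).
Proof.
exists Uk; split.
  move=> k; rewrite /Uk; case: unpickle => [p|]; first exact: Good_open.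
  by move=> N _; exists [::].
move=> N HN; split.
  case=> _ /(coH_iff HN) H k; rewrite /Uk; case: unpickle => // p; exact: H.
move=> H; split => //; apply/(coH_iff HN) => t y.
by have := H (pickle (t, y)); rewrite /Uk pickleK.
Qed.

End Ev.

Section Sig.
Variable n : nat.
Variable i0 : 'I_n.
Local Open Scope ring_scope.

Definition lsig (l : letter n) : int := if l.1 == i0 then (if l.2 then 1 else -1) else 0.
Definition ssig (s : seq (letter n)) : int := foldr (fun l a => lsig l + a) 0 s.
Definition sig (u : F n) := ssig (val u).

Lemma lsig_flip l : lsig (flip l) = - lsig l.
Proof. case: l => i [] ; rewrite /lsig /flip /=; case: (i == i0) => //=; by rewrite ?opprK ?oppr0. Qed.

Lemma ssig_red_step l r : ssig (red_step l r) = lsig l + ssig r.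
Proof.
case: r => [|y r] //=; case: ifP => // /canc_flip ->.
by rewrite lsig_flip addrA subrr add0r.
Qed.

Lemma ssig_reduce s : ssig (reduce s) = ssig s.
Proof.
elim: s => [|x s IH] //.
have -> : reduce (x :: s) = red_step x (reduce s) by [].
by rewrite ssig_red_step IH.
Qed.

Lemma ssig_cat s1 s2 : ssig (s1 ++ s2) = ssig s1 + ssig s2.
Proof. elim: s1 => [|x s IH] /=; first by rewrite add0r. by rewrite IH addrA. Qed.

Lemma ssig_rev s : ssig (rev s) = ssig s.
Proof.
elim: s => [|x s IH] //; rewrite rev_cons -cats1 ssig_cat IH /= addr0 addrC //.
Qed.

Lemma ssig_flip s : ssig (map (@flip n) s) = - ssig s.
Proof. elim: s => [|x s IH] /=; first by rewrite oppr0. by rewrite IH lsig_flip opprD. Qed.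

Lemma sigM u v : sig (Fmul u v) = sig u + sig v.
Proof. by rewrite /sig /= ssig_reduce ssig_cat. Qed.

Lemma sigV u : sig (Finv u) = - sig u.
Proof. by rewrite /sig /= ssig_reduce ssig_rev ssig_flip. Qed.

Lemma normal_sig (P : pred int) : P 0 -> (forall a b, P a -> P b -> P (a - b)) ->
  isNormal (fun u => P (sig u)).
Proof.
move=> P0 PB; split => [|x y|g x] /=; rewrite ?sigM ?sigV //; first exact: PB.
by rewrite addrC addKr.
Qed.

Lemma qeq_sig (P : pred int) a b : qeq (fun u => P (sig u)) a b = P (sig a - sig b).
Proof. by rewrite /qeq sigM sigV. Qed.

Lemma reducedb_nseq k (l : letter n) : reducedb (nseq k l).
Proof.
elim: k => [|k IH] //; case: k IH => [|k] //= IH.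
by rewrite /canc eqxx eqxx /= IH.
Qed.

Definition pw (b : bool) (k : nat) : F n := exist _ (nseq k (i0, b)) (reducedb_nseq _ _).

Lemma sig_pw b k : sig (pw b k) = if b then k%:Z else - k%:Z.
Proof.
rewrite /sig /=; elim: k => [|k IH] /=; first by case: b; rewrite ?oppr0.
rewrite IH /lsig /= eqxx; case: b {IH} => /=; rewrite intS //.
by rewrite opprD.
Qed.

Definition pwz (z : int) : F n := match z with Posz k => pw true k | Negz k => pw false k.+1 end.

Lemma sig_pwz z : sig (pwz z) = z.
Proof. by case: z => k; rewrite /= sig_pw // NegzE. Qed.

Lemma sig_gen : sig (gen i0) = 1.
Proof. by rewrite /sig /= /lsig /= eqxx. Qed.

Definition N0 := fun u => (fun z : int => z == 0) (sig u).

Lemma N0_normal : isNormal N0.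
Proof. apply: normal_sig => // a b /eqP -> /eqP ->; by rewrite subrr. Qed.

Lemma N0_notcoH : ~ quot_coHopfian N0.
Proof.
move=> H.
pose f := fun x => pwz (sig x + sig x).
have h1 : forall x y, qeq N0 x y -> qeq N0 (f x) (f y).
  move=> x y; rewrite !qeq_sig !sig_pwz subr_eq0 => /eqP ->; by rewrite subrr.
have h2 : forall x y, qeq N0 (f (Fmul x y)) (Fmul (f x) (f y)).
  move=> x y; rewrite !qeq_sig sigM !sig_pwz sigM; apply/eqP; lia.
have h3 : forall x y, qeq N0 (f x) (f y) -> qeq N0 x y.
  move=> x y; rewrite !qeq_sig !sig_pwz !subr_eq0 => /eqP H1; apply/eqP; lia.
have [x Hx] := H f h1 h2 h3 (gen i0).
rewrite qeq_sig sig_pwz sig_gen subr_eq0 in Hx. move/eqP: Hx; lia.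
Qed.

End Sig.

Section Nm.
Variable n : nat.
Variable i0 : 'I_n.
Variable M : nat.
Local Open Scope ring_scope.

Definition Nm := fun u => (fun z : int => (M.+1%:Z %| z)%Z) (sig i0 u).

Lemma Nm_normal : isNormal Nm.
Proof. apply: normal_sig => [|a b Ha Hb]; [exact: dvdz0 | exact: rpredB]. Qed.

Definition rr (u : F n) : nat := absz (sig i0 u %% M.+1%:Z)%Z.

Lemma rrE u : (rr u)%:Z = (sig i0 u %% M.+1%:Z)%Z.
Proof. by rewrite /rr abszE ger0_norm // modz_ge0. Qed.

Lemma rr_lt u : (rr u < M.+1)%N.
Proof.
have : (rr u)%:Z < M.+1%:Z by rewrite rrE ltz_pmod.
by rewrite ltz_nat.
Qed.

Lemma qeq_rr a b : qeq Nm a b <-> rr a = rr b.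
Proof.
rewrite /Nm qeq_sig.
change ((M.+1%:Z %| sig i0 a - sig i0 b)%Z <-> rr a = rr b).
rewrite -eqz_mod_dvd -!rrE; split; first by move/eqP; case.
by move=> ->.
Qed.

Lemma rr_pw k : (k < M.+1)%N -> rr (pw i0 true k) = k.
Proof.
move=> Hk; apply/eqP; rewrite -eqz_nat rrE sig_pw modz_small //.
Qed.

Lemma Nm_coH : quot_coHopfian Nm.
Proof.
move=> f _ _ Hinj y.
pose g := fun k : 'I_M.+1 => (inord (rr (f (pw i0 true k))) : 'I_M.+1).
have ginj : injective g.
  move=> k1 k2 /(congr1 (@nat_of_ord _)); rewrite /g !inordK ?rr_lt // => /qeq_rr /Hinj /qeq_rr.
  by rewrite !rr_pw //; apply: val_inj.
have [h gh hg] := injF_bij ginj.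
exists (pw i0 true (h (inord (rr y)))); apply/qeq_rr.
have := congr1 (@nat_of_ord _) (hg (inord (rr y))); rewrite /g !inordK ?rr_lt //.
Qed.

End Nm.

Lemma small_dvd (m : nat) (z : int) : (absz z < m)%N -> (z == 0%R) = (m%:Z %| z)%Z.
Proof.
move=> H; rewrite dvdzE /= -absz_eq0.
case E: (absz z) => [|k] //=; first by rewrite dvdn0.
apply/esym/negbTE; apply/negP => /dvdn_leq => /(_ isT); rewrite -E.
by apply/negP; rewrite -ltnNge.
Qed.

Definition Mb n (i0 : 'I_n) (s : seq (F n)) : nat := foldr (fun g a => absz (sig i0 g) + a) 0 s.

Lemma Mb_ge n (i0 : 'I_n) s g : g \in s -> absz (sig i0 g) <= Mb i0 s.
Proof.
elim: s => [|x s IH] //=; rewrite in_cons => /orP[/eqP -> | H]; first exact: leq_addr.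
exact: leq_trans (IH H) (leq_addl _ _).
Qed.

Theorem mainTheorem16 (n : nat) (hn : 2 <= n) :
  Pi02_in (@isNormal n) (fun N => isNormal N /\ quot_coHopfian N) /\
  ~ closed_in (@isNormal n) (fun N => isNormal N /\ quot_coHopfian N).
Proof.
split; first exact: part1.
have i0 : 'I_n := Ordinal (ltnW hn).
case=> K [HK HC].
have nC : ~ K (N0 i0) by move/(HC _ (N0_normal i0)) => [_ /N0_notcoH].
have [s Hs] := HK _ nC.
apply: (Hs (Nm i0 (Mb i0 s))).
  move=> g Hg; rewrite /Nm /N0 /= -small_dvd //.
  by rewrite ltnS; apply: Mb_ge.
by apply/(HC _ (Nm_normal i0 _)); split; [exact: Nm_normal | exact: Nm_coH].
Qed.
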